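(* Let $\Gamma$ be an infinite subsemigroup of $M(n,\mathbb Z)$ (the $n\times n$ integer matrices under multiplication) which acts irreducibly on $\mathbb R^n$, i.e. the only $\Gamma$-invariant linear subspaces of $\mathbb R^n$ are $\{0\}$ and $\mathbb R^n$. Then the induced action of $\Gamma$ on the torus $\mathbb T^n=\mathbb R^n/\mathbb Z^n$, given by $A\cdot(x+\mathbb Z^n)=Ax+\mathbb Z^n$, is expansive.
   Context: An endomorphism action $\rho$ of a semigroup $\Gamma$ on a metrizable topological group $X$ is expansive if there is a neighborhood $U$ of the identity with $\bigcap_{\gamma\in\Gamma}\rho(\gamma)^{-1}(U)=\{e\}$ (the identity map may be adjoined to $\Gamma$ without affecting this). *)

(* Defs.v *)
From HB Require Import structures.
From mathcomp Require Import all_boot all_order all_algebra.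
From mathcomp Require Import all_classical all_reals all_analysis.
Set Implicit Arguments. Unset Strict Implicit. Unset Printing Implicit Defensive.
Import Order.TTheory GRing.Theory Num.Theory.
Import numFieldNormedType.Exports.
Local Open Scope classical_set_scope.
Local Open Scope ring_scope.

Definition intmxR (R : realType) (n : nat) (A : 'M[int]_n) : 'M[R]_n :=
  map_mx (fun z : int => z%:~R) A.

Definition intvec (R : realType) (n : nat) (k : 'cV[int]_n) : 'cV[R]_n :=
  map_mx (fun z : int => z%:~R) k.

Definition is_lattice_point (R : realType) (n : nat) (x : 'cV[R]_n) : Prop :=
  exists k : 'cV[int]_n, x = intvec R k.

Definition is_subsemigroup (n : nat) (G : set 'M[int]_n) : Prop :=
  forall A B, G A -> G B -> G (A *m B).

Definition is_subspace (R : realType) (n : nat) (V : set 'cV[R]_n) : Prop :=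
  V 0 /\ forall (a : R) u v, V u -> V v -> V (a *: u + v).

Definition acts_irreducibly (R : realType) (n : nat) (G : set 'M[int]_n) : Prop :=
  forall V : set 'cV[R]_n, is_subspace V ->
    (forall A v, G A -> V v -> V (intmxR R A *m v)) ->
    V = [set 0] \/ V = setT.

(* Expansiveness of the induced action on T^n = R^n / Z^n, with the quotient
   topology unfolded: a neighbourhood U of the identity of T^n is described by
   its preimage W in R^n, a Z^n-saturated set which is a neighbourhood of 0.
   The identity map is adjoined to Gamma (the condition W x).  The conclusion
   "the intersection is {e}" says that x + Z^n = Z^n, i.e. x is in Z^n. *)
Definition torus_expansive (R : realType) (n : nat) (G : set 'M[int]_n) : Prop :=
  exists W : set 'cV[R]_n,
    nbhs (0 : 'cV[R]_n) W /\
    (forall x (k : 'cV[int]_n), W x <-> W (x + intvec R k)) /\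
    (forall x : 'cV[R]_n,
        W x -> (forall A, G A -> W (intmxR R A *m x)) -> is_lattice_point x).

(* Main.v *)
Require Import Defs.
From HB Require Import structures.
From mathcomp Require Import all_boot all_order all_algebra.
From mathcomp Require Import all_classical all_reals all_analysis.
From mathcomp Require Import algC ring lra zify.
From Stdlib Require Import Classical.
Set Implicit Arguments. Unset Strict Implicit. Unset Printing Implicit Defensive.
Import Order.TTheory GRing.Theory Num.Theory.
Import numFieldNormedType.Exports.
Local Open Scope classical_set_scope.
Local Open Scope ring_scope.

Lemma tr_pid_gt0 (R : numFieldType) n (r : nat) :
  (0 < r)%N -> 0 < \tr (pid_mx r : 'M[R]_n.+1).
Proof.
move=> r0; rewrite /mxtrace (bigD1 ord0) //= mxE /= r0 /=.
apply: (lt_le_trans ltr01); rewrite lerDl; apply: sumr_ge0 => i _.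
by rewrite mxE; case: (_ && _).
Qed.

Lemma trace_idem (R : numFieldType) n (E : 'M[R]_n.+1) :
  E *m E = E -> E != 0 -> \tr E != 0.
Proof.
move=> EE E0.
pose C := col_ebase E; pose B := row_ebase E; pose P : 'M[R]_n.+1 := pid_mx (\rank E).
have dE : E = C *m P *m B by rewrite /C /P /B mulmx_ebase.
have PKP : P *m (B *m C) *m P = P.
  have : C *m (P *m (B *m C) *m P) *m B = C *m P *m B.
    by rewrite -dE -EE {1 2}dE !mulmxA.
  move/(congr1 (mulmx^~ (invmx B))); rewrite !mulmxK ?row_ebase_unit //.
  move/(congr1 (mulmx (invmx C))); rewrite -!mulmxA !mulKmx ?col_ebase_unit //.
have PP : P *m P = P by rewrite /P pid_mx_id ?rank_leq_col.
have trE : \tr E = \tr P.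
  rewrite dE mxtrace_mulC mulmxA -{2}PKP -{1}PP.
  by rewrite mulmxA mxtrace_mulC mulmxA.
rewrite trE; apply: lt0r_neq0; apply: tr_pid_gt0.
by rewrite lt0n mxrank_eq0.
Qed.


Lemma nat_min (P : nat -> Prop) :
  (exists k, P k) -> exists k, P k /\ forall j, P j -> (k <= j)%N.
Proof.
move=> [k Pk].
suff H : forall b, (exists k, (k <= b)%N /\ P k) ->
  exists k, P k /\ forall j, P j -> (k <= j)%N by apply: (H k); exists k.
elim=> [|b IH] [j [jb Pj]].
  exists 0%N; split; last by [].
  by move: jb; rewrite leqn0 => /eqP <-.
case: (classic (exists k, (k <= b)%N /\ P k)) => [ex|nex]; first exact: IH.
exists j; split => // i Pi.
case: (leqP j i) => // ij; exfalso; apply: nex; exists i; split => //.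
rewrite -ltnS; exact: (leq_trans ij jb).
Qed.

Lemma mx_col0 (R : numFieldType) n (Z : 'M[R]_n) :
  (forall a : 'cV[R]_n, Z *m a = 0) -> Z = 0.
Proof.
move=> H; apply/matrixP => i j.
have := congr1 (fun M : 'cV_n => M i 0) (H (delta_mx j 0)).
rewrite !mxE (bigD1 j) //= mxE !eqxx mulr1 big1 ?addr0 // => k /negbTE kj.
by rewrite mxE kj mulr0.
Qed.

Section TF.
Variables (R : numFieldType) (n : nat) (L : {vspace 'M[R]_n.+1}).
Hypothesis mulL : forall Y Z, Y \in L -> Z \in L -> Y *m Z \in L.

Definition inN X := X \in L /\ forall Y, Y \in L -> \tr (X *m Y) = 0.

Lemma inN0 : inN 0.
Proof. by split; [exact: mem0v | move=> Y _; rewrite mul0mx mxtrace0]. Qed.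

Lemma inND X Y : inN X -> inN Y -> inN (X + Y).
Proof.
move=> [XL XN] [YL YN]; split; first exact: memvD.
by move=> Z ZL; rewrite mulmxDl mxtraceD XN // YN // addr0.
Qed.

Lemma inNZ a X : inN X -> inN (a *: X).
Proof.
move=> [XL XN]; split; first exact: memvZ.
by move=> Z ZL; rewrite -scalemxAl mxtraceZ XN // mulr0.
Qed.

Lemma inN_mulr X Y : inN X -> Y \in L -> inN (X *m Y).
Proof.
move=> [XL XN] YL; split; first exact: mulL.
by move=> Z ZL; rewrite -mulmxA XN // mulL.
Qed.

Lemma inN_mull X Y : inN X -> Y \in L -> inN (Y *m X).
Proof.
move=> [XL XN] YL; split; first exact: mulL.
by move=> Z ZL; rewrite -mulmxA mxtrace_mulC -mulmxA XN // mulL.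
Qed.

Lemma inN_horner Q f : inN Q -> inN (horner_mx Q f *m Q).
Proof.
move=> QN; elim/poly_ind: f => [|f c IH].
  by rewrite rmorph0 mul0mx; exact: inN0.
rewrite rmorphD rmorphM /= horner_mx_X horner_mx_C -mulmxE mulmxDl.
rewrite mul_scalar_mx; apply: inND; last exact: inNZ.
apply: inN_mulr => //.
by case: QN.
Qed.

Lemma key_E Q : inN Q -> \rank (Q *m Q) = \rank Q -> Q = 0.
Proof.
move=> QN rk.
have [D dQ] : exists D, Q = Q *m Q *m D.
  have sub : ((Q *m Q)^T <= Q^T)%MS by rewrite trmx_mul submxMl.
  have : (Q^T <= (Q *m Q)^T)%MS.
    by rewrite -(mxrank_leqif_sup sub) !mxrank_tr rk.
  case/submxP => D' /(congr1 trmx); rewrite trmxK trmx_mul trmxK => dQ.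
  by exists D'^T.
rewrite !mulmxE in dQ.
have QpD k : Q = Q ^+ k.+1 * D ^+ k.
  elim: k => [|k IH]; first by rewrite expr1 expr0 mulr1.
  have H1 : Q ^+ k.+1 = Q ^+ k.+2 * D.
    by rewrite exprSr {2}dQ -!mulmxE !mulmxA 2!exprSr -!mulmxE.
  by rewrite {1}IH H1 (exprS D) -!mulmxE mulmxA.
apply/eqP; apply/negPn/negP => Q0.
have [m [q q0 dp]] := multiplicity_XsubC (char_poly Q) 0.
have p0 : char_poly Q != 0 by apply: monic_neq0; apply: char_poly_monic.
rewrite p0 /= in q0.
have CH := Cayley_Hamilton Q.
rewrite dp subr0 rmorphM rmorphXn /= horner_mx_X in CH.
have YQ : horner_mx Q q * Q = 0.
  case: m dp CH => [|m] dp CH.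
    by move: CH; rewrite expr0 mulr1 => ->; rewrite mul0r.
  by rewrite {2}(QpD m) mulrA CH mul0r.
have [h dh] : exists h, q - (q.[0])%:P = h * 'X.
  have : root (q - (q.[0])%:P) 0 by rewrite /root hornerD hornerN hornerC subrr.
  by case/factor_theorem => h ->; exists h; rewrite subr0.
set c := q.[0] in dh q0.
have c0 : c != 0 by [].
pose e := (- c^-1) *: (h * 'X).
pose E := horner_mx Q e.
have EQ : E * Q = Q.
  have : horner_mx Q q = c%:M + horner_mx Q h * Q.
    have dq : q = h * 'X + c%:P by rewrite -dh subrK.
    by rewrite {1}dq rmorphD rmorphM /= horner_mx_X horner_mx_C addrC.
  move=> hq; move: YQ; rewrite hq mulrDl -!mulmxE mul_scalar_mx => /eqP.
  rewrite addr_eq0 => /eqP hQQ.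
  have hQQ' : horner_mx Q h *m Q *m Q = - (c *: Q) by rewrite hQQ opprK.
  rewrite /E /e linearZ /= rmorphM /= horner_mx_X -!mulmxE -scalemxAl hQQ'.
  by rewrite scalerN scaleNr opprK scalerA mulVf // scale1r.
pose f := (- c^-1) *: h.
have dE : E = horner_mx Q f * Q.
  by rewrite /E /e /f scalerAl rmorphM /= horner_mx_X.
have EE : E *m E = E.
  rewrite mulmxE {2}dE mulrA.
  have -> : E * horner_mx Q f = horner_mx Q f * E by apply: comm_horner_mx2.
  by rewrite -mulrA EQ -dE.
have E0 : E != 0.
  by apply: contra Q0 => /eqP E0; rewrite -EQ E0 mul0r.
have EN : inN E by rewrite dE -mulmxE; apply: inN_horner.
have := trace_idem EE E0.
by case: EN => EL EN; rewrite -{1}EE EN // eqxx.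
Qed.


Hypothesis irr : forall V : 'cV[R]_n.+1 -> Prop, V 0 ->
  (forall a u v, V u -> V v -> V (a *: u + v)) ->
  (forall Y v, Y \in L -> V v -> V (Y *m v)) ->
  (forall v, V v -> v = 0) \/ (forall v, V v).

Lemma coord_mul Y (w : 'cV[R]_n.+1) (Z : 'M[R]_n.+1) : Y \in L ->
  Y *m Z *m w = \sum_(j < \dim L) (vbasis L)`_j *m Z *m (coord (vbasis L) j Y *: w).
Proof.
move=> YL; rewrite {1}(coord_vbasis YL) !mulmx_suml; apply: eq_bigr => j _.
by rewrite -!scalemxAl scalemxAr.
Qed.

Lemma nondeg X : inN X -> X = 0.
Proof.
move=> XN; apply/eqP/negPn/negP => X0.
have [r [[Z [ZN [Z0 rZ]]] rmin]] := nat_min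
  (ex_intro (fun r => exists X, inN X /\ X != 0 /\ \rank X = r) _
     (ex_intro _ X (conj XN (conj X0 (erefl (\rank X)))))).
have low Y : inN Y -> Y != 0 -> (r <= \rank Y)%N.
  by move=> YN Y0; apply: rmin; exists Y.
have ZL : Z \in L by case: ZN.
have C1 Y : Y \in L -> Z *m Y *m Z = 0.
  move=> YL; apply/eqP/negPn/negP => nz.
  have N1 : inN (Z *m Y) := inN_mulr ZN YL.
  have N2 : inN (Z *m Y *m Z) := inN_mulr N1 ZL.
  have r2 := low _ N2 nz.
  have r1 : \rank (Z *m Y) = r.
    apply/eqP; rewrite eqn_leq -{1}rZ mxrankM_maxl /=.
    exact: (leq_trans r2 (mxrankM_maxl _ _)).
  have s1 : ((Z *m Y)^T <= Z^T)%MS by rewrite trmx_mul submxMl.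
  have e1 : ((Z *m Y)^T :=: Z^T)%MS.
    apply/eqmxP; rewrite /eqmx s1 /=.
    by rewrite -(mxrank_leqif_sup s1) !mxrank_tr r1 rZ.
  have r3 : \rank (Z *m Y *m (Z *m Y)) = \rank (Z *m Y).
    rewrite -mxrank_tr trmx_mul (eqmxMr _ e1) -trmx_mul mxrank_tr r1.
    by apply/eqP; rewrite eqn_leq r2 -{1}rZ mxrankM_maxr.
  move: nz; rewrite (key_E N1 r3) mul0mx eqxx //.
have C2 : Z *m Z = 0.
  apply/eqP/negPn/negP => nz.
  have N2 : inN (Z *m Z) := inN_mulr ZN ZL.
  have r2 := low _ N2 nz.
  have r3 : \rank (Z *m Z) = \rank Z.
    by apply/eqP; rewrite eqn_leq mxrankM_maxr rZ.
  by move: Z0; rewrite (key_E ZN r3) eqxx.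
have bL (i : 'I_(\dim L)) : (vbasis L)`_i \in L.
  by apply: vbasis_mem; apply: memt_nth.
pose V := fun v : 'cV[R]_n.+1 => exists (a : 'cV[R]_n.+1)
  (c : 'I_(\dim L) -> 'cV[R]_n.+1),
  v = Z *m a + \sum_(i < \dim L) (vbasis L)`_i *m Z *m c i.
have V0 : V 0.
  exists 0, (fun=> 0); rewrite mulmx0 add0r big1 // => i _; by rewrite mulmx0.
have Vlin a u v : V u -> V v -> V (a *: u + v).
  move=> [a1 [c1 ->]] [a2 [c2 ->]].
  exists (a *: a1 + a2), (fun i => a *: c1 i + c2 i).
  rewrite [in RHS](eq_bigr (fun i : 'I_(\dim L) => a *: ((vbasis L)`_i *m Z *m c1 i)
     + (vbasis L)`_i *m Z *m c2 i)); last by move=> i _; rewrite mulmxDr scalemxAr.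
  by rewrite big_split /= mulmxDr scalerDr scaler_sumr -scalemxAr addrACA.
have Vinv Y v : Y \in L -> V v -> V (Y *m v).
  move=> YL [a [c ->]].
  exists 0, (fun j : 'I_(\dim L) => coord (vbasis L) j Y *: a +
     \sum_(i < \dim L) coord (vbasis L) j (Y *m (vbasis L)`_i) *: c i).
  rewrite mulmx0 add0r mulmxDr mulmx_sumr.
  rewrite (eq_bigr (fun i : 'I_(\dim L) => \sum_(j < \dim L) (vbasis L)`_j *m Z *m
     (coord (vbasis L) j (Y *m (vbasis L)`_i) *: c i))); last first.
    by move=> i _; rewrite !mulmxA coord_mul // mulL // bL.
  rewrite mulmxA (@coord_mul Y a Z YL).
  rewrite exchange_big /= -big_split /=; apply: eq_bigr => j _.
  by rewrite mulmxDr mulmx_sumr.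
have Vkill v : V v -> Z *m v = 0.
  move=> [a [c ->]]; rewrite mulmxDr mulmxA C2 mul0mx add0r mulmx_sumr.
  by rewrite big1 // => i _; rewrite !mulmxA C1 ?mul0mx // bL.
have VZ a : V (Z *m a).
  by exists a, (fun=> 0); rewrite big1 ?addr0 // => i _; rewrite mulmx0.
case: (irr V0 Vlin Vinv) => [H|H].
  by move: Z0; rewrite (mx_col0 (fun a => H _ (VZ a))) eqxx.
by move: Z0; rewrite (mx_col0 (fun a => Vkill _ (H a))) eqxx.
Qed.
End TF.


Lemma bern (R : numDomainType) (x : R) k :
  1 <= x -> 1 + k%:R * (x - 1) <= x ^+ k.
Proof.
move=> x1; have x0 : 0 <= x := le_trans ler01 x1.
have h0 : 0 <= x - 1 by rewrite subr_ge0.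
elim: k => [|k IH]; first by rewrite mul0r addr0 expr0.
rewrite exprSr; apply: le_trans (ler_wpM2r x0 IH).
rewrite mulrDl mul1r -mulrA.
have : k%:R * (x - 1) <= k%:R * ((x - 1) * x).
  apply: ler_wpM2l; first exact: ler0n.
  by rewrite -{1}(mulr1 (x - 1)); apply: ler_wpM2l.
move=> H; apply: le_trans (lerD (lexx x) H).
by rewrite mulrSr mulrDl mul1r addrCA (addrC 1) subrK addrC.
Qed.

Lemma mapX n (C : 'M[int]_n.+1) k :
  map_mx (intr : int -> algC) (C ^+ k) = (map_mx intr C) ^+ k.
Proof.
elim: k => [|k IH]; first by rewrite !expr0 map_mx1.
by rewrite !exprSr -!mulmxE map_mxM IH.
Qed.

Lemma eig_bound n (A : 'M[algC]_n.+1) (M : algC) z :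
  (forall k i j, `|(A ^+ k) i j| <= M) -> eigenvalue A z -> `|z| <= 1.
Proof.
move=> HM /eigenvalueP [v vA v0].
have vk k : v *m A ^+ k = z ^+ k *: v.
  elim: k => [|k IH]; first by rewrite !expr0 mulmx1 scale1r.
  by rewrite exprSr -mulmxE mulmxA IH -scalemxAl vA scalerA -exprSr.
have [i vi] : exists i, v 0 i != 0.
  apply/existsP; apply: contraR v0 => /existsPn H.
  by apply/eqP/rowP => j; rewrite mxE; apply/eqP; move/negPn: (H j).
set K := \sum_j `|v 0 j| * M.
have bnd k : `|z| ^+ k * `|v 0 i| <= K.
  rewrite -normrX -normrM.
  have := congr1 (fun w : 'rV_n.+1 => w 0 i) (vk k); rewrite !mxE => <-.
  apply: le_trans (ler_norm_sum _ _ _) _.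
  by apply: ler_sum => j _; rewrite normrM ler_wpM2l.
have vi0 : 0 < `|v 0 i| by rewrite normr_gt0.
set K' := K / `|v 0 i|.
have bnd' k : `|z| ^+ k <= K' by rewrite ler_pdivlMr.
rewrite real_leNgt ?normr_real ?real1 //; apply/negP => z1.
have h0 : 0 < `|z| - 1 by rewrite subr_gt0.
have K0 : 0 <= K' := le_trans (exprn_ge0 0 (normr_ge0 z)) (bnd' 0%N).
have := archi_boundP (divr_ge0 K0 (ltW h0)).
set k := Num.bound _; rewrite ltr_pdivrMr // => HK.
have := le_trans (bern k (ltW z1)) (bnd' k).
move=> H.
have H2 : k%:R * (`|z| - 1) <= 1 + k%:R * (`|z| - 1) by rewrite lerDr ler01.
have := lt_le_trans HK (le_trans H2 H).
by rewrite ltxx.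
Qed.

Lemma tr_bound n (C : 'M[int]_n.+1) (M : int) :
  (forall k i j, `|(C ^+ k) i j| <= M) -> `|\tr C| <= (n.+1)%:R.
Proof.
move=> HC; pose A := map_mx (intr : int -> algC) C.
have HA k i j : `|(A ^+ k) i j| <= M%:~R.
  by rewrite -mapX mxE -intr_norm ler_int.
have [rs drs] := closed_field_poly_normal (char_poly A).
rewrite (monicP (char_poly_monic A)) scale1r in drs.
have srs : size rs = n.+1.
  by have := size_char_poly A; rewrite drs size_prod_XsubC => -[].
have trA : \tr A = \sum_(z <- rs) z.
  have := char_poly_trace A (ltn0Sn n).
  have H := @coefPn_prod_XsubC _ rs; rewrite srs in H.
  by rewrite drs H // => /oppr_inj.
have eig z : z \in rs -> `|z| <= 1.
  move=> zrs; apply: (eig_bound HA).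
  by rewrite eigenvalue_root_char drs root_prod_XsubC.
have : `|\tr A| <= (n.+1)%:R.
  rewrite trA; apply: le_trans (ler_norm_sum _ _ _) _.
  rewrite -srs -sum1_size natr_sum big_seq [X in _ <= X]big_seq; apply: ler_sum => z zrs.
  exact: eig.
rewrite /A trace_map_mx -intr_norm -(ler_int algC).
by rewrite rmorph_nat.
Qed.


Definition VF (R : realType) n (F : seq 'M[int]_n) (v : 'cV[R]_n) : Prop :=
  exists T : 'cV[R]_n -> Prop, T v /\
    (exists r : R, forall u, T u -> forall i, `|u i 0| <= r) /\
    (forall B u, B \in F -> T u -> T (intmxR R B *m u)).
Arguments VF : clear implicits.

Lemma intvecE (R : realType) n (k : 'cV[int]_n) i : intvec R k i 0 = (k i 0)%:~R.
Proof. by rewrite mxE. Qed.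

Lemma intmxRE (R : realType) n (A : 'M[int]_n) i j : intmxR R A i j = (A i j)%:~R.
Proof. by rewrite mxE. Qed.

Lemma intmxR_mul (R : realType) n (A B : 'M[int]_n) :
  intmxR R (A *m B) = intmxR R A *m intmxR R B.
Proof. exact: map_mxM. Qed.

Lemma intmxR_vec (R : realType) n (A : 'M[int]_n) k :
  intmxR R A *m intvec R k = intvec R (A *m k).
Proof. by rewrite /intvec /intmxR map_mxM. Qed.

Lemma intvecD (R : realType) n (k l : 'cV[int]_n) :
  intvec R (k + l) = intvec R k + intvec R l.
Proof. by apply/matrixP => i j; rewrite !mxE intrD. Qed.

Lemma intvecN (R : realType) n (k : 'cV[int]_n) :
  intvec R (- k) = - intvec R k.
Proof. by apply/matrixP => i j; rewrite !mxE intrN. Qed.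

Lemma int_small (z : int) : `|z| < 1 -> z = 0.
Proof.
move=> h; apply/eqP; rewrite -normr_le0.
by rewrite -ltzD1 add0r.
Qed.

Lemma expansive_of (R : realType) n (G : set 'M[int]_n) (F : seq 'M[int]_n) :
  is_subsemigroup G -> (forall B, B \in F -> G B) ->
  (forall v, VF R n F v -> v = 0) -> torus_expansive R G.
Proof.
move=> Hsemi FG H0.
pose Cst : R := \sum_(B <- F) \sum_i \sum_j `|B i j|%:~R.
have rowB B i : B \in F -> \sum_j `|intmxR R B i j| <= Cst.
  move=> BF; rewrite /Cst (big_rem B BF) /=.
  apply: le_trans (_ : \sum_i \sum_j `|B i j|%:~R <= _); last first.
    rewrite lerDl; apply: sumr_ge0 => C _; apply: sumr_ge0 => i' _; apply: sumr_ge0 => j _.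
    by rewrite ler0z.
  rewrite [X in _ <= X](bigD1 i) //= -[X in X <= _]addr0; apply: lerD.
    by apply: ler_sum => j _; rewrite intmxRE intr_norm.
  apply: sumr_ge0 => i' _; apply: sumr_ge0 => j _; by rewrite ler0z.
have Cst0 : 0 <= Cst.
  apply: sumr_ge0 => C _; apply: sumr_ge0 => i' _; apply: sumr_ge0 => j _.
  by rewrite ler0z.
pose eps : R := (2 * (Cst + 1))^-1.
have eps0 : 0 < eps by rewrite invr_gt0; lra.
have epsC : (Cst + 1) * eps = 2^-1.
  by rewrite /eps invfM mulrCA mulfV ?mulr1 //; lra.
pose W := fun x : 'cV[R]_n => exists k, forall i, `|x i 0 - intvec R k i 0| < eps.
have Wsat x k : W x <-> W (x + intvec R k).
  split => [[l Hl]|[l Hl]].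
    exists (l + k) => i; rewrite intvecD !mxE.
    have := Hl i; rewrite !mxE.
    by have -> : x i 0 + (k i 0)%:~R - ((l i 0)%:~R + (k i 0)%:~R) =
      x i 0 - (l i 0)%:~R :> R by ring.
  exists (l - k) => i; have := Hl i; rewrite !mxE intrB.
  by have -> : x i 0 + (k i 0)%:~R - (l i 0)%:~R =
      x i 0 - ((l i 0)%:~R - (k i 0)%:~R) :> R by ring.
exists W; split.
  apply/nbhs_ballP; exists eps => // y [_ Hy]; exists 0 => i.
  have := Hy i 0; rewrite /ball /= !mxE sub0r normrN.
  by rewrite subr0.
split; first exact: Wsat.
move=> x [k Hk] HA.
pose t := x - intvec R k.
pose T : 'cV[R]_n -> Prop := fun u => (forall i, `|u i 0| < eps) /\ (forall A, G A -> W (intmxR R A *m u)).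
have Tt : T t.
  split; first by move=> i; have := Hk i; rewrite /t !mxE.
  move=> A GA; rewrite /t mulmxBr intmxR_vec -intvecN.
  exact: (proj1 (Wsat (intmxR R A *m x) (- (A *m k))) (HA A GA)).
have TF B u : B \in F -> T u -> T (intmxR R B *m u).
  move=> BF [Hu HAu]; have GB := FG B BF.
  have [l Hl] := HAu B GB.
  have bnd i : `|(intmxR R B *m u) i 0| <= Cst * eps.
    rewrite mxE; apply: le_trans (ler_norm_sum _ _ _) _.
    apply: le_trans (_ : \sum_j `|intmxR R B i j| * eps <= _).
      apply: ler_sum => j _; rewrite normrM; apply: ler_wpM2l => //.
      exact: ltW (Hu j).
    by rewrite -mulr_suml; apply: ler_wpM2r; [exact: ltW | exact: rowB].
  have l0 : l = 0.
    apply/matrixP => i j; rewrite (ord1 j) [RHS]mxE; apply: int_small.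
    rewrite -(ltr_int R) intr_norm.
    have := Hl i; have := bnd i; rewrite intvecE => h1 h2.
    have : `|(l i 0)%:~R : R| < (Cst + 1) * eps.
      rewrite mulrDl mul1r.
      have -> : (l i 0)%:~R = (intmxR R B *m u) i 0 - ((intmxR R B *m u) i 0 - (l i 0)%:~R) :> R by ring.
      apply: le_lt_trans (ler_normB _ _) _; exact: ler_ltD.
    by rewrite epsC => h; apply: lt_trans h _; lra.
  split.
    by move=> i; have := Hl i; rewrite l0 intvecE !mxE subr0.
  by move=> A GA; rewrite mulmxA -intmxR_mul; apply: HAu; exact: Hsemi.
have : VF R n F t.
  exists T; split; first exact: Tt.
  split; last exact: TF.
  by exists eps => u [Hu _] i; exact: ltW (Hu i).
move/H0 => t0; exists k.
by apply/eqP; rewrite -subr_eq0 -/t t0.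
Qed.


Lemma nat_max (P : nat -> Prop) b :
  (exists k, P k) -> (forall k, P k -> (k <= b)%N) ->
  exists k, P k /\ forall j, P j -> (j <= k)%N.
Proof.
move=> [k0 Pk0] Pb.
have [u [Uu Umin]] := nat_min (ex_intro (fun u => forall k, P k -> (k <= u)%N) b Pb).
exists u; split => //.
case: (classic (P u)) => // nPu; exfalso.
case: u Uu Umin nPu => [|u] Uu Umin nPu.
  by move: (Uu _ Pk0); rewrite leqn0 => /eqP k00; apply: nPu; rewrite -k00.
have : (u.+1 <= u)%N; last by rewrite ltnn.
apply: Umin => k Pk; have := Uu _ Pk; rewrite leq_eqVlt => /orP [/eqP ek|//].
by exfalso; apply: nPu; rewrite -ek.
Qed.

Section VFprops.
Variables (R : realType) (n : nat).

Lemma sub_add (V : set 'cV[R]_n) u v : is_subspace V -> V u -> V v -> V (u + v).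
Proof. by move=> [_ Vl] Vu Vv; have := Vl 1 _ _ Vu Vv; rewrite scale1r. Qed.

Lemma sub_scale (V : set 'cV[R]_n) a u : is_subspace V -> V u -> V (a *: u).
Proof. by move=> [V0 Vl] Vu; have := Vl a _ _ Vu V0; rewrite addr0. Qed.

Lemma span_closed m (V : set 'cV[R]_n) (Mx : 'M[R]_(m, n)) (w : 'rV[R]_n) :
  is_subspace V -> (forall i, V (row i Mx)^T) -> (w <= Mx)%MS -> V w^T.
Proof.
move=> SV HM /submxP [D ->]; rewrite mulmx_sum_row.
apply: (big_ind (fun w : 'rV_n => V w^T)).
- by rewrite trmx0; case: SV.
- by move=> x y Vx Vy; rewrite linearD /=; exact: sub_add.
by move=> i _; rewrite linearZ /=; apply: sub_scale.
Qed.

Lemma VF_sub F : is_subspace (VF R n F).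
Proof.
split.
  exists (fun u => u = 0); split => //; split.
    by exists 0 => u -> i; rewrite mxE normr0.
  by move=> B u _ ->; rewrite mulmx0.
move=> a u v [T1 [T1u [[r1 Hr1] I1]]] [T2 [T2v [[r2 Hr2] I2]]].
exists (fun w => exists x y, T1 x /\ T2 y /\ w = a *: x + y); split.
  by exists u, v.
split.
  exists (`|a| * r1 + r2) => w [x [y [Tx [Ty ->]]]] i.
  rewrite !mxE; apply: le_trans (ler_normD _ _) _; apply: lerD; last exact: Hr2.
  by rewrite normrM; apply: ler_wpM2l => //; exact: Hr1.
move=> B w BF [x [y [Tx [Ty ->]]]].
exists (intmxR R B *m x), (intmxR R B *m y); split; first exact: I1.
split; first exact: I2.
by rewrite mulmxDr scalemxAr.
Qed.

Lemma VF_cons F A v : VF R n (A :: F) v -> VF R n F v.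
Proof.
move=> [T [Tv [bd I]]]; exists T; split => //; split => //.
by move=> B u BF; apply: I; rewrite in_cons BF orbT.
Qed.

Lemma VF_consA F A v : VF R n (A :: F) v -> VF R n F (intmxR R A *m v).
Proof.
move=> [T [Tv [bd I]]]; exists T; split.
  by apply: I => //; rewrite mem_head.
split => //.
by move=> B u BF; apply: I; rewrite in_cons BF orbT.
Qed.

Definition has_rank (V : set 'cV[R]_n) k :=
  exists Mx : 'M[R]_n, (forall i, V (row i Mx)^T) /\ \rank Mx = k.

End VFprops.

Lemma VF_invariant (R : realType) n (G : set 'M[int]_n) :
  exists F, (forall B, B \in F -> G B) /\
    (forall A v, G A -> VF R n F v -> VF R n (A :: F) v).
Proof.
pose P k := exists F, (forall B, B \in F -> G B) /\
  (forall j, has_rank (VF R n F) j -> (j <= k)%N).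
have [k0 [[F0 [F0G k0b]] k0min]] : exists k0, P k0 /\ forall j, P j -> (k0 <= j)%N.
  apply: nat_min; exists n; exists [::]; split => // j [Mx [_ <-]].
  exact: rank_leq_col.
exists F0; split => // A v GA vF.
set V' := VF R n (A :: F0).
have [k1 [[Mx' [Mrow rk1]] k1max]] : exists k1, has_rank V' k1 /\
    forall j, has_rank V' j -> (j <= k1)%N.
  apply: (@nat_max _ n).
    exists 0%N, 0; split; last exact: mxrank0.
    by move=> i; rewrite row0 trmx0; case: (VF_sub R (A :: F0)).
  by move=> k [Mx [_ <-]]; exact: rank_leq_col.
have k01 : (k0 <= k1)%N.
  apply: k0min; exists (A :: F0); split => //.
  by move=> B; rewrite in_cons => /orP [/eqP ->|]; [exact GA | exact: F0G].
case: (boolP (v^T <= Mx')%MS) => vM.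
  by have := span_closed (VF_sub R (A :: F0)) Mrow vM; rewrite trmxK.
exfalso.
pose N := (Mx' + v^T)%MS.
have Nrow i : VF R n F0 (row i N)^T.
  have : (row i N <= Mx' + v^T)%MS by exact: row_sub.
  case/sub_addsmxP => [[u1 u2] /= ->]; rewrite linearD /=.
  apply: sub_add; first exact: VF_sub.
    apply: (@span_closed R n _ _ Mx'); first exact: VF_sub.
      by move=> j; apply: (VF_cons (A := A)); exact: Mrow.
    exact: submxMl.
  apply: (@span_closed R n _ _ v^T); first exact: VF_sub.
    by move=> j; rewrite row_id trmxK.
  exact: submxMl.
have rN : (k1 < \rank N)%N.
  rewrite -rk1 ltn_neqAle (mxrank_leqif_sup (addsmxSl Mx' v^T)) mxrankS ?addsmxSl // andbT.
  apply: contra vM => NM; exact: submx_trans (addsmxSr Mx' v^T) NM.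
have := k0b (\rank N) (ex_intro _ N (conj Nrow erefl)).
move=> h; have := leq_trans h k01; by rewrite leqNgt rN.
Qed.


Lemma mul_delta_entry (R : ringType) n (Z : 'M[R]_n) i j :
  (Z *m delta_mx j (0 : 'I_1)) i 0 = Z i j.
Proof.
rewrite !mxE (bigD1 j) //= mxE !eqxx mulr1 big1 ?addr0 // => k /negbTE kj.
by rewrite mxE kj mulr0.
Qed.

Section LocBdd.
Variables (R : realType) (n' : nat) (G : set 'M[int]_(n'.+1)).
Hypothesis Hsemi : is_subsemigroup G.
Hypothesis Hirr : acts_irreducibly R G.
Hypothesis Hloc : forall C, G C -> forall v, VF R n'.+1 [:: C] v.

Lemma intmxRX (C : 'M[int]_(n'.+1)) k : intmxR R (C ^+ k) = intmxR R C ^+ k.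
Proof.
elim: k => [|k IH]; first by rewrite !expr0 /intmxR map_mx1.
by rewrite !exprSr -!mulmxE intmxR_mul IH.
Qed.

Lemma bounded_pow C : G C -> exists M : int, forall k i j, `|(C ^+ k) i j| <= M.
Proof.
move=> GC.
have Hj : forall j : 'I_(n'.+1), exists r : R, forall (k : nat) (i : 'I_(n'.+1)),
    `|(intmxR R C ^+ k *m delta_mx j (0 : 'I_1)) i 0| <= r.
  move=> j; have [T [Te [[r Hr] I]]] := Hloc GC (delta_mx j (0 : 'I_1)).
  exists r => k i; apply: Hr; elim: k => [|k IH]; first by rewrite expr0 mul1mx.
  by rewrite exprS -mulmxE -mulmxA; apply: I => //; rewrite mem_head.
case: (choice Hj) => rf Hrf.
pose Mr := \sum_j `|rf j|.
have Mr0 : 0 <= Mr by apply: sumr_ge0 => j _.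
exists (Num.bound Mr)%:Z => k i j.
rewrite -(ler_int R) intr_norm.
have := Hrf j k i; rewrite -intmxRX mul_delta_entry mxE => h.
apply: (le_trans h); apply: (le_trans (ler_norm _)).
apply: (le_trans (_ : `|rf j| <= Mr)).
  rewrite /Mr (bigD1 j) //= lerDl; exact: sumr_ge0.
exact: ltW (archi_boundP Mr0).
Qed.

Lemma trb C : G C -> `|\tr C| <= n'.+1%:R.
Proof. by move=> /bounded_pow [M HM]; apply: (tr_bound HM). Qed.

Lemma loc_finite : finite_set G.
Proof.
pose Pd d := exists s : seq 'M[int]_(n'.+1), (forall A, A \in s -> G A) /\
  \dim <<map (@intmxR R _) s>>%VS = d.
have [d [[s [sG ds]] dmax]] : exists d, Pd d /\ forall j, Pd j -> (j <= d)%N.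
  apply: (@nat_max _ (\dim (fullv : {vspace 'M[R]_(n'.+1)}))).
    by exists (\dim <<map (@intmxR R (n'.+1)) [::]>>%VS), [::].
  by move=> k [s' [_ <-]]; apply: dimvS; exact: subvf.
pose S := map (@intmxR R _) s.
pose L := <<S>>%VS.
have spanG A : G A -> intmxR R A \in L.
  move=> GA.
  have sub : (L <= <<map (@intmxR R _) (A :: s)>>)%VS.
    apply/span_subvP => x xs; apply: memv_span; by rewrite /= in_cons xs orbT.
  have := dimv_leqif_sup sub => -[_ eq].
  have dle : (\dim <<map (@intmxR R _) (A :: s)>>%VS <= \dim L)%N.
    rewrite ds; apply: dmax; exists (A :: s); split => //.
    by move=> B; rewrite in_cons => /orP [/eqP ->|]; [exact GA | exact: sG].
  have : (<<map (@intmxR R _) (A :: s)>> <= L)%VS.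
    rewrite -eq eqn_leq dle andbT; exact: dimvS.
  move/subvP; apply; apply: memv_span; exact: mem_head.
have memS X : X \in S -> exists A, [/\ A \in s, G A & X = intmxR R A].
  by case/mapP => A As ->; exists A; split => //; exact: sG.
pose t := in_tuple S.
have tS (i : 'I_(size S)) : t`_i \in S by apply: mem_nth.
have tspan Y : Y \in L -> Y = \sum_i coord t i Y *: t`_i.
  by move=> YL; apply: coord_span.
have mulSL X Z : X \in S -> Z \in L -> X *m Z \in L.
  move=> /memS [A [_ GA ->]] ZL; rewrite (tspan Z ZL) mulmx_sumr.
  apply: memv_suml => i _; rewrite -scalemxAr; apply: memvZ.
  have [B [_ GB ->]] := memS _ (tS i).
  by rewrite -intmxR_mul; apply: spanG; exact: Hsemi.
have mulL Y Z : Y \in L -> Z \in L -> Y *m Z \in L.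
  move=> YL ZL; rewrite (tspan Y YL) mulmx_suml.
  apply: memv_suml => i _; rewrite -scalemxAl; apply: memvZ.
  exact: mulSL.
have irrL : forall V : 'cV[R]_(n'.+1) -> Prop, V 0 ->
    (forall a u v, V u -> V v -> V (a *: u + v)) ->
    (forall Y v, Y \in L -> V v -> V (Y *m v)) ->
    (forall v, V v -> v = 0) \/ (forall v, V v).
  move=> V V0 Vl Vi.
  have := Hirr (conj V0 Vl) (fun A v GA Vv => Vi _ _ (spanG A GA) Vv).
  by case=> ->; [left => v -> | right].
have inj A A' : G A -> G A' -> (forall B, B \in s -> \tr (A *m B) = \tr (A' *m B)) ->
    A = A'.
  move=> GA GA' Htr.
  have XN : inN L (intmxR R A - intmxR R A').
    split; first by apply: memvB; apply: spanG.
    move=> Y YL; rewrite (tspan Y YL) mulmx_sumr raddf_sum /=.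
    apply: big1 => i _; rewrite -scalemxAr mxtraceZ.
    have [B [Bs GB dB]] := memS _ (tS i).
    rewrite dB mulmxBl raddfB /= -!intmxR_mul /intmxR !trace_map_mx.
    by rewrite Htr // subrr mulr0.
  have := nondeg mulL irrL XN => /eqP; rewrite subr_eq0 => /eqP e.
  apply/matrixP => i j; have := congr1 (fun M : 'M[R]_(n'.+1) => M i j) e.
  by rewrite !mxE => /intr_inj.
pose N : int := n'.+1%:R.
pose enc (x : int) : 'I_(absz N + absz N).+1 := inord (absz (x + N)).
have encK x y : `|x| <= N -> `|y| <= N -> enc x = enc y -> x = y.
  move=> hx hy /(congr1 val); rewrite /enc /= !inordK; lia.
pose f (A : 'M[int]_(n'.+1)) : {ffun 'I_(size s) -> 'I_(absz N + absz N).+1} :=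
  [ffun j : 'I_(size s) => enc (\tr (A *m s`_j))].
have finj A A' : G A -> G A' -> f A = f A' -> A = A'.
  move=> GA GA' e; apply: inj => // B Bs.
  pose j := Ordinal (etrans (index_mem B s) Bs).
  have := congr1 (fun phi : {ffun 'I_(size s) -> 'I_(absz N + absz N).+1} => phi j) e; rewrite !ffunE /= nth_index //.
  by apply: encK; apply: trb; apply: Hsemi => //; exact: sG.
pose g phi := xget 0 [set A | G A /\ f A = phi].
have : G `<=` [set g phi | phi in [set: {ffun 'I_(size s) -> 'I_(absz N + absz N).+1}]].
  move=> A GA; exists (f A) => //.
  have [Gg fg] : G (g (f A)) /\ f (g (f A)) = f A.
    by apply: (xgetPex 0 (P := [set A' | G A' /\ f A' = f A])); exists A.
  exact: finj.
move/sub_finite_set; apply; apply: finite_image; exact: finite_finset.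
Qed.

End LocBdd.

Unset Implicit Arguments.

Theorem corollary3p3 (R : realType) (n : nat) (G : set 'M[int]_n) :
  is_subsemigroup G -> infinite_set G -> acts_irreducibly R G ->
  torus_expansive R G.
Proof.
case: n G => [|n'] G Hsemi Hinf Hirr.
  exists setT; split; first exact: filterT.
  split; first by [].
  move=> x _ _; exists 0; apply/matrixP => i; by case: i.
have [F [FG Fcons]] := VF_invariant R G.
have inv A v : G A -> VF R n'.+1 F v -> VF R n'.+1 F (intmxR R A *m v).
  by move=> GA vF; apply: VF_consA; exact: Fcons.
case: (Hirr _ (VF_sub R F) inv) => HV.
  by apply: (expansive_of Hsemi FG) => v; rewrite HV.
exfalso; apply: Hinf; apply: (loc_finite Hsemi Hirr) => C GC v.
have : VF R n'.+1 (C :: F) v by apply: Fcons => //; rewrite HV.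
move=> [T [Tv [bd I]]]; exists T; split => //; split => //.
by move=> B u; rewrite mem_seq1 => /eqP ->; apply: I; rewrite mem_head.
Qed.
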